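(* Let $k$ be a field and let $H$ be an induced subgraph of the graph $G$ such that the complement graph $H^c$ is disconnected. Then $\operatorname{pd}^k(G)\geqslant |V(H)|-1$.
   Context: A graph is a finite simple graph with nonempty vertex set. For a graph $G$ with vertices $x_1,\dots,x_n$, $R_k(G)=k[x_1,\dots,x_n]$, $I(G)$ is the ideal generated by $x_ix_j$ for all edges $\{x_i,x_j\}$, and $\operatorname{pd}^k(G)$ is the projective dimension of the $R_k(G)$-module $R_k(G)/I(G)$. For a graph $H$, $H^c$ is the simple graph on the same vertex set in which two distinct vertices are adjacent iff they are not adjacent in $H$. An induced subgraph on a vertex subset $W$ has vertex set $W$ and all edges of $G$ with both ends in $W$. *)

(* Defs.v *)
From HB Require Import structures.
From mathcomp Require Import all_boot all_order all_algebra.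
From mathcomp Require Import fingraph.
From mathcomp Require Import mpoly.
Set Implicit Arguments. Unset Strict Implicit. Unset Printing Implicit Defensive.
Import GRing.Theory.
Local Open Scope ring_scope.

Definition projective_mod (R : comNzRingType) (P : lmodType R) : Prop :=
  forall (M N : lmodType R) (f : {linear M -> N}) (g : {linear P -> N}),
    (forall y : N, exists x : M, f x = y) ->
    exists h : {linear P -> M}, forall p : P, f (h p) = g p.

(* There is a projective resolution
     ... -> P_2 -> P_1 -> P_0 -> R/I -> 0
   of the cyclic module R/I with P_i = 0 for i > m (length <= m).
   The augmentation P_0 -> R/I is given by an R-linear lift
   eps : P_0 -> R composed with the projection R -> R/I. *)
Definition has_proj_res_of_length (R : comNzRingType) (I : R -> Prop) (m : nat)
  : Prop :=
  exists (P : nat -> lmodType R) (d : forall i, {linear P i.+1 -> P i})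
         (eps : {linear P 0%N -> R^o}),
    [/\ (forall i, projective_mod (P i)),
        (forall i, (m < i)%N -> forall x : P i, x = 0),
        (forall r : R, exists x : P 0%N, I ((eps x : R) - r)),
        (forall x : P 0%N, I (eps x : R) <-> exists y, d 0%N y = x) &
        (forall i (x : P i.+1), d i x = 0 <-> exists y, d i.+1 y = x)].

(* pd_R(R/I) >= n : every projective resolution of R/I has length >= n
   (this includes the case pd = infinity). *)
Definition pd_ge (R : comNzRingType) (I : R -> Prop) (n : nat) : Prop :=
  forall m, has_proj_res_of_length I m -> (n <= m)%N.

Definition simple_graph (n : nat) (e : rel 'I_n) : Prop :=
  (0 < n)%N /\ irreflexive e /\ ssrbool.symmetric e.

Definition edge_ideal (k : fieldType) (n : nat) (e : rel 'I_n)
  : {mpoly k[n]} -> Prop :=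
  fun p => exists c : 'I_n -> 'I_n -> {mpoly k[n]},
             p = \sum_(i : 'I_n) \sum_(j : 'I_n | e i j)
                   c i j * ('X_i * 'X_j).

Definition compl_induced_adj (n : nat) (e : rel 'I_n) (W : {set 'I_n})
  : rel 'I_n :=
  fun x y => [&& x \in W, y \in W, x != y & ~~ e x y].

Definition compl_induced_disconnected (n : nat) (e : rel 'I_n)
  (W : {set 'I_n}) : Prop :=
  exists u v, [/\ u \in W, v \in W & ~~ connect (compl_induced_adj e W) u v].

(* Main.v *)
Require Import Defs.
From HB Require Import structures.
From mathcomp Require Import all_boot all_order all_algebra.
From mathcomp Require Import mpoly.
From mathcomp Require finmap monalg.
Set Implicit Arguments. Unset Strict Implicit. Unset Printing Implicit Defensive.
Import GRing.Theory.
Local Open Scope ring_scope.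

Section Koszul.
Variable R : comNzRingType.
Variable y : nat -> R.

Fixpoint kc (V : lmodType R) (w : nat) : lmodType R :=
  match w with 0 => V | w'.+1 => ((kc V w' * kc V w')%type : lmodType R) end.

Fixpoint kd (V : lmodType R) (w : nat) : kc V w -> kc V w :=
  match w return kc V w -> kc V w with
  | 0 => fun _ => 0
  | w'.+1 => fun c => ((kd c.1 + y w' *: c.2 : kc V w'), (- kd c.2 : kc V w'))
  end.

Fixpoint kmap (V U : lmodType R) (f : V -> U) (w : nat) : kc V w -> kc U w :=
  match w return kc V w -> kc U w with
  | 0 => f
  | w'.+1 => fun c => (kmap f c.1, kmap f c.2)
  end.

Fixpoint kge (V : lmodType R) (w : nat) (s : nat) : kc V w -> Prop :=
  match w return kc V w -> Prop with
  | 0 => fun c => if s is 0 then True else c = 0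
  | w'.+1 => fun c => kge s c.1 /\ kge s.-1 c.2
  end.

Fixpoint kall (V : lmodType R) (P : V -> Prop) (w : nat) : kc V w -> Prop :=
  match w return kc V w -> Prop with
  | 0 => P
  | w'.+1 => fun c => kall P c.1 /\ kall P c.2
  end.

Fixpoint kall2 (V U : lmodType R) (P : V -> U -> Prop) (w : nat)
  : kc V w -> kc U w -> Prop :=
  match w return kc V w -> kc U w -> Prop with
  | 0 => P
  | w'.+1 => fun c c' => kall2 P c.1 c'.1 /\ kall2 P c.2 c'.2
  end.

Fixpoint kbot (V : lmodType R) (w : nat) : kc V w -> V :=
  match w return kc V w -> V with
  | 0 => fun c => c
  | w'.+1 => fun c => kbot c.1
  end.

Fixpoint kkb (V : lmodType R) (w : nat) : kc V w -> kc V w :=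
  match w return kc V w -> kc V w with
  | 0 => fun _ => 0
  | w'.+1 => fun c => (kkb c.1, c.2)
  end.

Fixpoint kdelta (V : lmodType R) (w : nat) (r : V) : kc V w :=
  match w return kc V w with
  | 0 => r
  | w'.+1 => (kdelta w' r, 0)
  end.

Section Lemmas.
Variable V : lmodType R.
Lemma kcD w (a1 a2 b1 b2 : kc V w) :
  ((a1, a2) : kc V w.+1) + (b1, b2) = ((a1 + b1 : kc V w), (a2 + b2 : kc V w)).
Proof. by []. Qed.
Lemma kcN w (a1 a2 : kc V w) :
  - ((a1, a2) : kc V w.+1) = ((- a1 : kc V w), (- a2 : kc V w)).
Proof. by []. Qed.
Lemma kcZ w r (a1 a2 : kc V w) :
  r *: ((a1, a2) : kc V w.+1) = ((r *: a1 : kc V w), (r *: a2 : kc V w)).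
Proof. by []. Qed.
Lemma kc0 w : (0 : kc V w.+1) = ((0 : kc V w), (0 : kc V w)).
Proof. by []. Qed.

Lemma kdD w (a b : kc V w) : kd (a + b) = kd a + kd b.
Proof.
elim: w a b => [|w IH] /=; first by move=> *; rewrite addr0.
case=> [a1 a2] [b1 b2]; rewrite /= kcD !IH scalerDr opprD.
by rewrite addrACA.
Qed.

Lemma kdZ w r (a : kc V w) : kd (r *: a) = r *: kd a.
Proof.
elim: w a => [|w IH] /=; first by move=> *; rewrite scaler0.
case=> [a1 a2]; rewrite /= kcZ !IH scalerDr scalerN.
by rewrite !scalerA mulrC.
Qed.

Lemma kd0 w : kd (0 : kc V w) = 0.
Proof. by have := kdZ 0 (0 : kc V w); rewrite !scale0r. Qed.

Lemma kdN w (a : kc V w) : kd (- a) = - kd a.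
Proof. by apply/eqP; rewrite -addr_eq0 -kdD addNr kd0. Qed.

Lemma kdB w (a b : kc V w) : kd (a - b) = kd a - kd b.
Proof. by rewrite kdD kdN. Qed.

Lemma kd_sum w (I : Type) (r : seq I) (P : pred I) (F : I -> kc V w) :
  kd (\sum_(i <- r | P i) F i) = \sum_(i <- r | P i) kd (F i).
Proof. by elim/big_rec2: _ => [|i x1 x2 _ <-]; rewrite ?kd0 ?kdD. Qed.

Lemma kdd w (a : kc V w) : kd (kd a) = 0.
Proof.
elim: w a => [|w IH] /=; first by move=> *.
case=> [a1 a2] /=; rewrite kdD kdZ !kdN !IH add0r scalerN addrN opprK.
by [].
Qed.
End Lemmas.

Section Map.
Variables V U : lmodType R.
Variable f : V -> U.
Hypothesis fD : forall a b, f (a + b) = f a + f b.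
Hypothesis fZ : forall r a, f (r *: a) = r *: f a.

Lemma f0 : f 0 = 0.
Proof. by have := fZ 0 0; rewrite !scale0r. Qed.
Lemma fN a : f (- a) = - f a.
Proof. by apply/eqP; rewrite -addr_eq0 -fD addNr f0. Qed.

Lemma kmapD w (a b : kc V w) : kmap f (a + b) = kmap f a + kmap f b.
Proof.
elim: w a b => [|w IH] /=; first by [].
by case=> [a1 a2] [b1 b2]; rewrite /= kcD !IH.
Qed.
Lemma kmapZ w r (a : kc V w) : kmap f (r *: a) = r *: kmap f a.
Proof.
elim: w a => [|w IH] /=; first by [].
by case=> [a1 a2]; rewrite /= kcZ !IH.
Qed.
Lemma kmap0 w : kmap f (0 : kc V w) = 0.
Proof. by have := kmapZ 0 (0 : kc V w); rewrite !scale0r. Qed.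
Lemma kmapN w (a : kc V w) : kmap f (- a) = - kmap f a.
Proof. by apply/eqP; rewrite -addr_eq0 -kmapD addNr kmap0. Qed.
Lemma kmapB w (a b : kc V w) : kmap f (a - b) = kmap f a - kmap f b.
Proof. by rewrite kmapD kmapN. Qed.
Lemma kmap_sum w (I : Type) (r : seq I) (P : pred I) (F : I -> kc V w) :
  kmap f (\sum_(i <- r | P i) F i) = \sum_(i <- r | P i) kmap f (F i).
Proof. by elim/big_rec2: _ => [|i x1 x2 _ <-]; rewrite ?kmap0 ?kmapD. Qed.
Lemma kmap_kd w (a : kc V w) : kmap f (kd a) = kd (kmap f a).
Proof.
elim: w a => [|w IH] /=; first by move=> _; rewrite f0.
by case=> [a1 a2]; rewrite /= kmapD kmapZ kmapN !IH.
Qed.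
End Map.

Lemma kmap_comp (V U X : lmodType R) (f : U -> X) (g : V -> U) w (a : kc V w) :
  kmap f (kmap g a) = kmap (fun x => f (g x)) a.
Proof. by elim: w a => [|w IH] //= [a1 a2]; rewrite !IH. Qed.
Lemma kmap_ext (V U : lmodType R) (f g : V -> U) w (a : kc V w) :
  (forall x, f x = g x) -> kmap f a = kmap g a.
Proof. by move=> fg; elim: w a => [|w IH] //= [a1 a2]; rewrite !IH. Qed.
Lemma kmap_id (V : lmodType R) w (a : kc V w) : kmap (fun x => x) a = a.
Proof. by elim: w a => [|w IH] //= [a1 a2]; rewrite !IH. Qed.
Lemma kmap_zero (V U : lmodType R) (f : V -> U) w (a : kc V w) :
  (forall x, f x = 0) -> kmap f a = 0.
Proof. by move=> f0; elim: w a => [|w IH] //= [a1 a2]; rewrite !IH. Qed.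
Lemma kbot_kmap (V U : lmodType R) (f : V -> U) w (a : kc V w) :
  kbot (kmap f a) = f (kbot a).
Proof. by elim: w a => [|w IH] //= [a1 a2]; rewrite !IH. Qed.

Section Bot.
Variable V : lmodType R.
Lemma kbotD w (a b : kc V w) : kbot (a + b) = kbot a + kbot b.
Proof. by elim: w a b => [|w IH] //= [a1 a2] [b1 b2]; rewrite ?kcD /= IH. Qed.
Lemma kbotZ w r (a : kc V w) : kbot (r *: a) = r *: kbot a.
Proof. by elim: w a => [|w IH] //= [a1 a2]; rewrite ?kcZ /= IH. Qed.
Lemma kbot0 w : kbot (0 : kc V w) = 0.
Proof. by have := kbotZ 0 (0 : kc V w); rewrite !scale0r. Qed.
Lemma kbotN w (a : kc V w) : kbot (- a) = - kbot a.
Proof. by apply/eqP; rewrite -addr_eq0 -kbotD addNr kbot0. Qed.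
Lemma kkb_kd w (a : kc V w) : kd (kkb a) = kd a.
Proof. by elim: w a => [|w IH] //= [a1 a2]; rewrite IH. Qed.
Lemma kkb_bot w (a : kc V w) : kbot (kkb a) = 0.
Proof. by elim: w a => [|w IH] //= [a1 a2]; rewrite IH. Qed.
Lemma kdelta_bot w (r : V) : kbot (kdelta w r) = r.
Proof. by elim: w => [|w IH] //=. Qed.

Lemma kge0 w (a : kc V w) : kge 0 a.
Proof. by elim: w a => [|w IH] //= [a1 a2]; split; apply: IH. Qed.
Lemma kge_zero w s : kge s (0 : kc V w).
Proof. by elim: w s => [|w IH] [|s] //=; split; apply: IH. Qed.
Lemma kgeD w s (a b : kc V w) : kge s a -> kge s b -> kge s (a + b).
Proof.
elim: w s a b => [|w IH] [|s] //=; first by move=> a b -> ->; rewrite addr0.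
  by case=> [a1 a2] [b1 b2] [? ?] [? ?]; split; apply: IH.
by case=> [a1 a2] [b1 b2] [? ?] [? ?]; split; apply: IH.
Qed.
Lemma kgeZ w s r (a : kc V w) : kge s a -> kge s (r *: a).
Proof.
elim: w s a => [|w IH] [|s] //=; first by move=> a ->; rewrite scaler0.
  by case=> [a1 a2] [? ?]; split; apply: IH.
by case=> [a1 a2] [? ?]; split; apply: IH.
Qed.
Lemma kgeN w s (a : kc V w) : kge s a -> kge s (- a).
Proof. by move=> h; rewrite -scaleN1r; apply: kgeZ. Qed.
Lemma kgeB w s (a b : kc V w) : kge s a -> kge s b -> kge s (a - b).
Proof. by move=> ha hb; apply: kgeD => //; apply: kgeN. Qed.
Lemma kge_kd w s (a : kc V w) : kge s a -> kge s.-1 (kd a).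
Proof.
elim: w s a => [|w IH] s /=; first by move=> *; apply: (kge_zero 0 s.-1).
case=> [a1 a2] /= [h1 h2]; split.
  by apply: kgeD; [apply: IH | apply: kgeZ].
by apply: kgeN; apply: IH.
Qed.
Lemma kge1 w (a : kc V w) : kge 1 a <-> kbot a = 0.
Proof.
elim: w a => [|w IH] //= [a1 a2] /=; split; first by case=> /IH.
by move=> /IH h; split=> //; apply: kge0.
Qed.
Lemma kc_triv w (a : kc V w) : (forall x : V, x = 0) -> a = 0.
Proof. by move=> h; elim: w a => [|w IH] //= [a1 a2]; rewrite (IH a1) (IH a2). Qed.
Lemma kge_mono w s (a : kc V w) : kge s.+1 a -> kge s a.
Proof.
elim: w s a => [|w IH] [|s] //= [a1 a2] [h1 h2]; split; try apply: kge0.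
  by apply: IH.
by apply: IH.
Qed.
Lemma kge_le w s t (a : kc V w) : (s <= t)%N -> kge t a -> kge s a.
Proof.
move=> le; elim: t le => [|t IHt]; first by rewrite leqn0 => /eqP ->.
rewrite leq_eqVlt => /orP [/eqP -> //| lt] h; apply: IHt => //.
exact: kge_mono.
Qed.
Lemma kge_kkb w (a : kc V w) : kge 1 (kkb a).
Proof. by apply/kge1; apply: kkb_bot. Qed.
End Bot.

Lemma kge_map (V U : lmodType R) (f : V -> U) w s (a : kc V w) :
  f 0 = 0 -> kge s a -> kge s (kmap f a).
Proof.
move=> f0; elim: w s a => [|w IH] [|s] //=; first by move=> a ->.
  by case=> [a1 a2] [? ?]; split; apply: IH.
by case=> [a1 a2] [? ?]; split; apply: IH.
Qed.

Section All.
Variable V : lmodType R.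
Variable P : V -> Prop.
Lemma kallD w (a b : kc V w) : (forall x y, P x -> P y -> P (x + y)) ->
  kall P a -> kall P b -> kall P (a + b).
Proof.
move=> hD; elim: w a b => [|w IH] /=; first by move=> a b; apply: hD.
by case=> [a1 a2] [b1 b2] [? ?] [? ?]; split; apply: IH.
Qed.
Lemma kallZ w r (a : kc V w) : (forall x, P x -> P (r *: x)) ->
  kall P a -> kall P (r *: a).
Proof.
move=> hZ; elim: w a => [|w IH] /=; first by move=> a; apply: hZ.
by case=> [a1 a2] [? ?]; split; apply: IH.
Qed.
Lemma kall_zero w : P 0 -> kall P (0 : kc V w).
Proof. by move=> h0; elim: w => [|w IH] //=. Qed.
Lemma kall_kd w (a : kc V w) : P 0 -> (forall x y, P x -> P y -> P (x + y)) ->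
  (forall r x, P x -> P (r *: x)) -> kall P a -> kall P (kd a).
Proof.
move=> h0 hD hZ; elim: w a => [|w IH] /=; first by [].
case=> [a1 a2] [? ?]; split.
  apply: kallD; [exact: hD | exact: IH | ].
  by apply: kallZ; [exact: hZ | ].
by rewrite -scaleN1r; apply: kallZ; [exact: hZ | exact: IH].
Qed.
Lemma kall_true w (a : kc V w) : (forall x, P x) -> kall P a.
Proof. by move=> h; elim: w a => [|w IH] //= [a1 a2]; split; apply: IH. Qed.
Lemma kall_imp (Q : V -> Prop) w (a : kc V w) :
  (forall x, P x -> Q x) -> kall P a -> kall Q a.
Proof. by move=> h; elim: w a => [|w IH] /=; [apply: h | case=> ? ? [? ?]; split; apply: IH]. Qed.
End All.

Lemma kall_map (V U : lmodType R) (P : U -> Prop) (f : V -> U) w (a : kc V w) :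
  kall (fun x => P (f x)) a -> kall P (kmap f a).
Proof. by elim: w a => [|w IH] //= [a1 a2] [? ?]; split; apply: IH. Qed.
Lemma kall_map' (V U : lmodType R) (P : U -> Prop) (f : V -> U) w (a : kc V w) :
  kall P (kmap f a) -> kall (fun x => P (f x)) a.
Proof. by elim: w a => [|w IH] //= [a1 a2] [? ?]; split; apply: IH. Qed.

Lemma kmap_eq0 (V U : lmodType R) (f : V -> U) w (a : kc V w) :
  kmap f a = 0 -> kall (fun x => f x = 0) a.
Proof.
move=> h; apply: (kall_map' (P := fun v => v = 0)); rewrite h.
exact: kall_zero.
Qed.

Section All2.
Variables V U : lmodType R.
Lemma klift (Rel : V -> U -> Prop) w (c : kc U w) : Rel 0 0 ->
  kall (fun v => exists u, Rel u v) c ->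
  exists c' : kc V w, kall2 (fun u v => Rel u v /\ (v = 0 -> u = 0)) c' c.
Proof.
move=> h0; elim: w c => [|w IH] /=.
  move=> v [u hu]; have [->|nz] := eqVneq v 0; first by exists 0.
  by exists u; split=> // /eqP; rewrite (negbTE nz).
case=> [c1 c2] /= [/IH [d1 h1] /IH [d2 h2]].
by exists (d1, d2).
Qed.
Lemma kall2_imp (Q Q' : V -> U -> Prop) w (a : kc V w) b :
  (forall u v, Q u v -> Q' u v) -> kall2 Q a b -> kall2 Q' a b.
Proof. by move=> h; elim: w a b => [|w IH] /=; [apply: h | case=> ? ? [? ?] [? ?]; split; apply: IH]. Qed.
Lemma kall2_ge w s (a : kc V w) (b : kc U w) :
  kall2 (fun u v => v = 0 -> u = 0) a b -> kge s b -> kge s a.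
Proof.
elim: w s a b => [|w IH] s /=.
  by case: s => // a b h /h.
by case=> [a1 a2] [b1 b2] [? ?] [? ?]; split; apply: IH; eauto.
Qed.
Lemma kall2_mapeq (f : V -> U) w (a : kc V w) b :
  kall2 (fun u v => f u = v) a b -> kmap f a = b.
Proof. by elim: w a b => [|w IH] //= [a1 a2] [b1 b2] /= [/IH -> /IH ->]. Qed.
Lemma kall2_sub (P : U -> Prop) (f : V -> U) w (a : kc V w) b :
  kall2 (fun u v => P (f u - v)) a b -> kall P (kmap f a - b).
Proof. by elim: w a b => [|w IH] //= [a1 a2] [b1 b2] /= [/IH ? /IH ?]. Qed.
End All2.


Section Exact.
Definition J (w : nat) (r : R) := exists f : nat -> R, r = \sum_(i < w) f i * y i.
Lemma J0 w : J w 0.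
Proof. by exists (fun _ => 0); rewrite big1 // => i _; rewrite mul0r. Qed.
Lemma JD w a b : J w a -> J w b -> J w (a + b).
Proof.
move=> [f ->] [g ->]; exists (fun i => f i + g i).
by rewrite -big_split /=; apply: eq_bigr => i _; rewrite mulrDl.
Qed.
Lemma JM w r a : J w a -> J w (r * a).
Proof.
move=> [f ->]; exists (fun i => r * f i).
by rewrite mulr_sumr; apply: eq_bigr => i _; rewrite mulrA.
Qed.
Lemma JN w a : J w a -> J w (- a).
Proof. by move=> h; rewrite -mulN1r; apply: JM. Qed.
Lemma JS w a : J w a -> J w.+1 a.
Proof.
move=> [f ->]; exists (fun i => if (i < w)%N then f i else 0).
rewrite big_ord_recr /= ltnn mul0r addr0; apply: eq_bigr => i _.
by rewrite ltn_ord.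
Qed.
Lemma Jy w : J w.+1 (y w).
Proof.
exists (fun i => if i == w then 1 else 0).
rewrite big_ord_recr /= eqxx mul1r big1 ?add0r // => i _.
by rewrite ltn_eqF // mul0r.
Qed.

Lemma bot_kd_J w (c : kc R^o w) : J w (kbot (kd c)).
Proof.
elim: w c => [|w IH] /=; first by move=> _; apply: J0.
case=> [a b] /=; rewrite kbotD kbotZ; apply: JD; first by apply: JS.
by move: (JM (kbot b : R) (Jy w)); rewrite mulrC.
Qed.

Lemma J_bot w r : J w r -> exists c : kc R^o w, kbot (kd c) = r.
Proof.
elim: w r => [|w IH] r /=.
  by move=> [f ->]; exists 0; rewrite big_ord0.
move=> [f ->]; rewrite big_ord_recr /=.
have [c hc] : exists c : kc R^o w, kbot (kd c) = \sum_(i < w) f i * y i.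
  by apply: IH; exists f.
exists ((c, kdelta w (f w : R^o)) : kc R^o w.+1) => /=.
by rewrite kbotD kbotZ hc kdelta_bot mulrC.
Qed.

Variable N : nat.
Hypothesis reg : forall w b, (w < N)%N -> J w (y w * b) -> J w b.

Lemma kexact_R w : (w <= N)%N -> forall c : kc R^o w, kd c = 0 -> kbot c = 0 ->
  exists u, kd u = c.
Proof.
elim: w => [|w IH] wN /=; first by move=> c _ ->; exists 0.
have {}IH := IH (ltnW wN).
case=> [a b] /= hd hb.
have h1 : kd a + y w *: b = 0 by move: hd => /(congr1 fst).
have h2 : kd b = 0 by move: hd => /(congr1 snd) /= /eqP; rewrite oppr_eq0 => /eqP.
have hJ : J w (kbot b).
  apply: reg => //; move: (congr1 (@kbot _ w) h1); rewrite kbotD kbotZ kbot0.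
  move=> e; have -> : y w * kbot b = - kbot (kd a).
    by apply/eqP; rewrite -addr_eq0 addrC; apply/eqP.
  apply: JN; exact: bot_kd_J.
have [c1 hc1] := J_bot hJ.
have [c2 hc2] : exists c2, kd c2 = b - kd c1.
  apply: IH; first by rewrite kdB h2 kdd subr0.
  by rewrite kbotD kbotN hc1 subrr.
set c := kkb (c1 + c2).
have hc : kd c = b by rewrite /c kkb_kd kdD hc2 addrC subrK.
have hcb : kbot c = 0 by rewrite /c kkb_bot.
have [u0 hu0] : exists u0, kd u0 = a + y w *: c.
  apply: IH; first by rewrite kdD kdZ hc.
  by rewrite kbotD kbotZ hb hcb scaler0 addr0.
exists ((u0, - c) : kc R^o w.+1) => /=.
by rewrite hu0 kdN hc opprK scalerN addrK.
Qed.
End Exact.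
End Koszul.

Module FreeM.
Import finmap monalg.


Section Free.
Variable R : comNzRingType.
Variable y : nat -> R.
Variable N : nat.
Hypothesis reg : forall w b, (w < N)%N -> J y w (y w * b) -> J y w b.

Section K.
Variable K : choiceType.
Local Notation F := (monalg.malg K R).
Local Notation mc := (@monalg.mcoeff K R).
Local Notation mU := (@monalg.mkmalgU K R).

Lemma mUZ k r (x : R) : mU k (r * x) = r *: mU k x.
Proof.
apply/monalg.malgP => k'; rewrite monalg.mcoeffZ !monalg.mcoeffU.
by rewrite mulrnAr.
Qed.

Fixpoint ksupp w : kc F w -> {fset K} :=
  match w return kc F w -> {fset K} with
  | 0 => fun g => monalg.msupp g
  | w'.+1 => fun c => (ksupp c.1 `|` ksupp c.2)%fset
  end.

Lemma ksuppP w (c : kc F w) : kall (fun g => (monalg.msupp g `<=` ksupp c)%fset) c.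
Proof.
elim: w c => [|w IH] /=; first by [].
case=> [a b] /=; split.
  by apply: kall_imp (IH a) => g h; apply: fsubset_trans h (fsubsetUl _ _).
by apply: kall_imp (IH b) => g h; apply: fsubset_trans h (fsubsetUr _ _).
Qed.

Lemma fst_sum w (I : Type) (r : seq I) (G : I -> kc F w.+1) :
  (\sum_(i <- r) G i).1 = \sum_(i <- r) (G i).1.
Proof. by elim/big_rec2: _ => // i x1 x2 _ <-. Qed.
Lemma snd_sum w (I : Type) (r : seq I) (G : I -> kc F w.+1) :
  (\sum_(i <- r) G i).2 = \sum_(i <- r) (G i).2.
Proof. by elim/big_rec2: _ => // i x1 x2 _ <-. Qed.

Lemma kdecomp (S : {fset K}) w (c : kc F w) :
  kall (fun g => (monalg.msupp g `<=` S)%fset) c ->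
  c = \sum_(k <- S) kmap (mU k : R^o -> F) (kmap (mc k : F -> R^o) c).
Proof.
elim: w c => [|w IH] /=; first by move=> g h; apply: monalg.monalgEw.
case=> [a b] /= [ha hb].
by apply: injective_projections; rewrite ?fst_sum ?snd_sum /=; [apply: IH | apply: IH].
Qed.

Lemma kexact_free w : (w <= N)%N -> forall c : kc F w, kd y c = 0 -> kbot c = 0 ->
  exists u, kd y u = c.
Proof.
move=> wN c hd hb.
have mcD k : forall a b : F, (mc k (a + b) : R^o) = mc k a + mc k b.
  by move=> a b; rewrite monalg.mcoeffD.
have mcZ k : forall r (a : F), (mc k (r *: a) : R^o) = r *: (mc k a : R^o).
  by move=> r a; rewrite monalg.mcoeffZ.
have mUD k : forall a b : R^o, mU k (a + b) = mU k a + mU k b.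
  by move=> a b; rewrite monalg.monalgUD.
have mUZ' k : forall r (a : R^o), mU k (r *: a) = r *: mU k a.
  by move=> r a; apply: mUZ.
rewrite [c](kdecomp (ksuppP c)).
elim: (enum_fset (ksupp c)) => [|k s [u hu]]; first by exists 0; rewrite big_nil kd0.
have [uk huk] : exists uk, kd y uk = kmap (mc k : F -> R^o) c.
  apply: (kexact_R reg wN).
    by rewrite -(kmap_kd _ (mcD k) (mcZ k)) hd kmap0.
  by rewrite kbot_kmap hb monalg.mcoeff0.
exists (kmap (mU k : R^o -> F) uk + u).
by rewrite big_cons kdD hu -(kmap_kd _ (mUD k) (mUZ' k)) huk.
Qed.
End K.

Section Proj.
Variable P : lmodType R.
Local Notation F := (monalg.malg P R).

Definition piF (g : F) : P := \sum_(k <- monalg.msupp g) monalg.mcoeff k g *: (k : P).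

Lemma piFEw (D : {fset P}) (g : F) : (monalg.msupp g `<=` D)%fset ->
  piF g = \sum_(k <- D) monalg.mcoeff k g *: (k : P).
Proof.
move=> sub; rewrite /piF (big_fset_incl _ sub) // => k _ kn.
by rewrite monalg.mcoeff_outdom // scale0r.
Qed.

Lemma piF_linear : linear piF.
Proof.
move=> a g1 g2.
pose D := (monalg.msupp g1 `|` monalg.msupp g2)%fset.
have s1 : (monalg.msupp g1 `<=` D)%fset by apply: fsubsetUl.
have s2 : (monalg.msupp g2 `<=` D)%fset by apply: fsubsetUr.
have s3 : (monalg.msupp (a *: g1 + g2) `<=` D)%fset.
  apply: (fsubset_trans (monalg.msuppD_le _ _)).
  by apply: fsetUSS => //; apply: (fsubset_trans (monalg.msuppZ_le _ _)).
rewrite (piFEw s1) (piFEw s2) (piFEw s3) scaler_sumr -big_split /=.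
apply: eq_bigr => k _; rewrite monalg.mcoeffD monalg.mcoeffZ scalerDl scalerA.
by [].
Qed.

HB.instance Definition _ := GRing.isLinear.Build R F P *:%R piF piF_linear.

Lemma kexact_proj w : projective_mod P -> (w <= N)%N ->
  forall c : kc P w, kd y c = 0 -> kbot c = 0 -> exists u, kd y u = c.
Proof.
move=> hP wN c hd hb.
have [h hh] : exists h : {linear P -> F}, forall p, piF (h p) = idfun p.
  apply: (hP F P piF idfun) => p.
  exists (monalg.mkmalgU p 1).
  change (piF (monalg.mkmalgU p 1) = p).
  rewrite (@piFEw [fset p]%fset); last exact: monalg.msuppU_le.
  rewrite big_seq_fset1 monalg.mcoeffUU scale1r.
  by [].
have hD : forall a b : P, h (a + b) = h a + h b by move=> a b; rewrite linearD.
have hZ : forall r (a : P), h (r *: a) = r *: h a by move=> r a; rewrite linearZ.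
have pD : forall a b : F, piF (a + b) = piF a + piF b by move=> a b; rewrite linearD.
have pZ : forall r (a : F), piF (r *: a) = r *: piF a by move=> r a; rewrite linearZ.
have [u hu] : exists u, kd y u = kmap h c.
  apply: (@kexact_free _ w wN).
    by rewrite -(kmap_kd _ hD hZ) hd (kmap0 hZ).
  by rewrite kbot_kmap hb raddf0.
exists (kmap piF u).
rewrite -(kmap_kd _ pD pZ) hu kmap_comp.
by rewrite (kmap_ext _ hh) kmap_id.
Qed.
End Proj.
End Free.

End FreeM.
Import FreeM.

Section Chase.
Variable R : comNzRingType.
Variable y : nat -> R.
Variable N : nat.
Hypothesis reg : forall w b, (w < N)%N -> J y w (y w * b) -> J y w b.
Variable m : nat.
Variable P : nat -> lmodType R.
Variable d : forall i, {linear P i.+1 -> P i}.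
Hypothesis hproj : forall i, projective_mod (P i).
Hypothesis hvan : forall i, (m < i)%N -> forall x : P i, x = 0.
Hypothesis hex : forall i (x : P i.+1), d i x = 0 <-> exists z, d i.+1 z = x.
Variable w : nat.
Hypothesis wN : (w <= N)%N.

Lemma dD i (a b : P i.+1) : d i (a + b) = d i a + d i b.
Proof. by rewrite linearD. Qed.
Lemma dZ i r (a : P i.+1) : d i (r *: a) = r *: d i a.
Proof. by rewrite linearZ. Qed.

Lemma claim s : (1 <= s)%N -> forall i, (m < i + s)%N ->
  forall (c : kc (P i) w), kge s c -> forall c' : kc (P i.+1) w, kge s.-1 c' ->
  kd y c = kmap (d i) c' ->
  exists u v, kge 1 u /\ c = kd y u + kmap (d i) v.
Proof.
elim: s => [//|s IH] _ i hm c hc c' hc' e.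
case: s IH hc hc' hm => [|s] IH hc hc' hm.
  have c'0 : c' = 0.
    by apply: kc_triv => x; apply: hvan; rewrite addn1 in hm.
  have hd : kd y c = 0 by rewrite e c'0 (kmap0 (@dZ i)).
  have [u hu] := kexact_proj reg (@hproj i) wN hd (proj1 (kge1 c) hc).
  exists (kkb u), 0; split; first exact: kge_kkb.
  by rewrite kkb_kd hu (kmap0 (@dZ i)) addr0.
have d0 : forall j, d j 0 = 0 by move=> j; rewrite raddf0.
have hall : kall (fun x => exists z, d i.+1 z = x) (kd y c').
  apply: (kall_imp (P := fun x => d i x = 0)); first by move=> x /hex.
  apply: kmap_eq0; rewrite (kmap_kd _ (@dD i) (@dZ i)) -e kdd //.
have [c'' hc''] := klift (d0 i.+1) hall.
have hge'' : kge s c''.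
  apply: (kall2_ge (kall2_imp _ hc'')); first by move=> u v [].
  exact: (kge_kd y hc').
have he'' : kd y c' = kmap (d i.+1) c''.
  by symmetry; apply: kall2_mapeq; apply: (kall2_imp _ hc'') => u v [].
have hm' : (m < i.+1 + s.+1)%N by rewrite addSnnS.
have [u' [v' [hu' e']]] := IH erefl i.+1 hm' c' hc' c'' hge'' he''.
set c1 := c - kmap (d i) u'.
have hd1 : kd y c1 = 0.
  rewrite /c1 kdB e -(kmap_kd _ (@dD i) (@dZ i)) -(kmapB (@dD i) (@dZ i)).
  rewrite {1}e' addrC addKr kmap_comp; apply: kmap_zero => x.
  by apply/(@hex i); exists x.
have hb1 : kbot c1 = 0.
  apply/kge1; apply: kgeB; first exact: (kge_le (isT : (1 <= s.+2)%N) hc).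
  by apply: kge_map => //; rewrite raddf0.
have [u hu] := kexact_proj reg (@hproj i) wN hd1 hb1.
exists (kkb u), u'; split; first exact: kge_kkb.
by rewrite kkb_kd hu /c1 subrK.
Qed.

Variable I : R -> Prop.
Hypothesis I0 : I 0.
Hypothesis ID : forall a b, I a -> I b -> I (a + b).
Hypothesis IM : forall r a, I a -> I (r * a).
Variable eps : {linear P 0 -> R^o}.
Hypothesis hsurj : forall r, exists x, I (eps x - r).
Hypothesis hex0 : forall x, I (eps x) <-> exists z, d 0 z = x.

Definition Io (x : R^o) : Prop := I x.
Lemma IN a : I a -> I (- a).
Proof. by move=> h; rewrite -mulN1r; apply: IM. Qed.

Lemma chase j : (m < j)%N -> forall z : kc R^o w, kge j z -> kall Io (kd y z) ->
  exists u : kc R^o w, kall Io (kd y u - z).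
Proof.
move=> mj z hz hdz.
have eD : forall a b : P 0, (eps (a + b) : R^o) = eps a + eps b.
  by move=> a b; rewrite linearD.
have eZ : forall r (a : P 0), (eps (r *: a) : R^o) = r *: eps a.
  by move=> r a; rewrite linearZ.
have hall : kall (fun v : R^o => exists u : P 0, I (eps u - v)) z.
  by apply: kall_true => v; apply: hsurj.
have r00 : I (eps 0 - 0) by rewrite raddf0 subr0.
have [z0 hz0] := klift (Rel := fun u (v : R^o) => I (eps u - v)) r00 hall.
have hge0 : kge j z0.
  by apply: (kall2_ge (kall2_imp _ hz0)) => // u v [].
have hI0 : kall Io (kmap eps z0 - z).
  by apply: kall2_sub; apply: (kall2_imp _ hz0) => u v [].
have hIkd : kall Io (kd y (kmap eps z0)).
  have -> : kd y (kmap eps z0) = kd y (kmap eps z0 - z) + kd y z.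
    by rewrite kdB subrK.
  apply: kallD; [exact: ID | | exact: hdz].
  by apply: kall_kd; [exact: I0 | exact: ID | move=> r x h; exact: IM | exact: hI0].
have hall' : kall (fun x => exists z, d 0 z = x) (kd y z0).
  apply: (kall_imp (P := fun x => I (eps x))); first by move=> x /hex0.
  by apply: kall_map'; rewrite (kmap_kd _ eD eZ).
have [c' hc'] := klift (Rel := fun u v => d 0 u = v) (raddf0 _) hall'.
have hgec' : kge j.-1 c'.
  apply: (kall2_ge (kall2_imp _ hc')); first by move=> u v [].
  exact: (kge_kd y hge0).
have hec' : kd y z0 = kmap (d 0) c'.
  by symmetry; apply: kall2_mapeq; apply: (kall2_imp _ hc') => u v [].
have j1 : (1 <= j)%N by apply: leq_ltn_trans mj.
have [u [v [hu e]]] := claim j1 (i := 0) mj hge0 hgec' hec'.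
exists (kmap eps u).
have -> : kd y (kmap eps u) - z =
    (kmap eps z0 - z) - kmap eps (kmap (d 0) v).
  by rewrite e (kmapD eD) (kmap_kd _ eD eZ) addrAC addrK.
apply: kallD; [exact: ID | exact: hI0 | ].
rewrite -scaleN1r; apply: kallZ; first by move=> x h; apply: IM.
rewrite kmap_comp; apply: kall_map; apply: kall_true => x.
by rewrite /Io; apply/hex0; exists x.
Qed.
End Chase.

Section Top.
Variable R : comNzRingType.
Variable y : nat -> R.

Fixpoint ktop (V : lmodType R) w : kc V w -> V :=
  match w return kc V w -> V with
  | 0 => fun c => c
  | w'.+1 => fun c => ktop c.2
  end.

Fixpoint kstrip (V : lmodType R) p q : kc V (q + p) -> kc V p :=
  match q return kc V (q + p) -> kc V p with
  | 0 => fun c => c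
  | q'.+1 => fun c => kstrip c.2
  end.

Fixpoint kT p : kc R^o p :=
  match p with 0 => (1 : R^o) | p'.+1 => (0, kT p') end.

Fixpoint zz (V : lmodType R) p q (c : kc V p) : kc V (q + p) :=
  match q return kc V (q + p) with
  | 0 => c
  | q'.+1 => (0, zz q' c)
  end.

Section V.
Variable V : lmodType R.
Lemma ktopD w (a b : kc V w) : ktop (a + b) = ktop a + ktop b.
Proof. by elim: w a b => [|w IH] //= [a1 a2] [b1 b2]; rewrite -IH. Qed.
Lemma ktopZ w r (a : kc V w) : ktop (r *: a) = r *: ktop a.
Proof. by elim: w a => [|w IH] //= [a1 a2]; rewrite -IH. Qed.
Lemma ktop0 w : ktop (0 : kc V w) = 0.
Proof. by have := ktopZ 0 (0 : kc V w); rewrite !scale0r. Qed.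
Lemma ktopN w (a : kc V w) : ktop (- a) = - ktop a.
Proof. by rewrite -scaleN1r ktopZ scaleN1r. Qed.
Lemma ktop_kd w (a : kc V w) : ktop (kd y a) = 0.
Proof. by elim: w a => [|w IH] //= [a1 a2] /=; rewrite ktopN IH oppr0. Qed.
Lemma kall_top (P : V -> Prop) w (a : kc V w) : kall P a -> P (ktop a).
Proof. by elim: w a => [|w IH] //= [a1 a2] [_ /IH]. Qed.

Lemma kstripD p q (a b : kc V (q + p)) : kstrip (a + b) = kstrip a + kstrip b.
Proof. by elim: q a b => [|q IH] //= [a1 a2] [b1 b2]; rewrite -IH. Qed.
Lemma kstripZ p q r (a : kc V (q + p)) : kstrip (r *: a) = r *: kstrip a.
Proof. by elim: q a => [|q IH] //= [a1 a2]; rewrite -IH. Qed.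
Lemma kstripN p q (a : kc V (q + p)) : kstrip (- a) = - kstrip a.
Proof. by rewrite -scaleN1r kstripZ scaleN1r. Qed.
Lemma kstripB p q (a b : kc V (q + p)) : kstrip (a - b) = kstrip a - kstrip b.
Proof. by rewrite kstripD kstripN. Qed.
Lemma kstrip_kd p q (a : kc V (q + p)) :
  kstrip (kd y a) = (-1) ^+ q *: kd y (kstrip a).
Proof.
elim: q a => [|q IH] /=; first by move=> a; rewrite scale1r.
case=> [a1 a2] /=; rewrite kstripN IH exprS -scaleN1r scalerA.
by [].
Qed.
Lemma kall_strip (P : V -> Prop) p q (a : kc V (q + p)) :
  kall P a -> kall P (kstrip a).
Proof. by elim: q a => [|q IH] //= [a1 a2] [_ /IH]. Qed.
Lemma ktop_strip p q (a : kc V (q + p)) : ktop (kstrip a) = ktop a.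
Proof.
by elim: q a => [|q IH] //=.
Qed.
Lemma kstrip_zz p q (c : kc V p) : kstrip (zz q c) = c.
Proof. by elim: q => [|q IH] //=. Qed.
End V.

Lemma kT_top p : ktop (kT p) = 1.
Proof. by elim: p. Qed.
Lemma kge_kT p : kge p (kT p).
Proof. by elim: p => [|p IH] //=; split=> //; apply: kge_zero. Qed.
Lemma kge_zz (V : lmodType R) p q s (c : kc V p) : kge s c -> kge (q + s) (zz q c).
Proof. by move=> h; elim: q => [|q IH] //=; split=> //; apply: kge_zero. Qed.

Lemma kallZ' (V : lmodType R) (P : V -> Prop) w r (a : kc V w) :
  (forall x, P (r *: x)) -> kall P (r *: a).
Proof. by move=> h; elim: w a => [|w IH] //= [a1 a2]; split; apply: IH. Qed.

Lemma kallZ2 (V : lmodType R) (P Q : V -> Prop) w r (a : kc V w) :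
  (forall x, Q x -> P (r *: x)) -> kall Q a -> kall P (r *: a).
Proof. by move=> h; elim: w a => [|w IH] /=; [apply: h | case=> ? ? [? ?]; split; apply: IH]. Qed.

Local Notation Jo w := (fun x : R^o => J y w x).
Lemma kall_kd_J w (c : kc R^o w) : kall (Jo w) (kd y c).
Proof.
elim: w c => [|w IH] /=; first by move=> _; exact: (J0 y 0).
case=> [a b] /=; split.
  apply: kallD; [by move=> ? ?; apply: JD | | ].
    by apply: kall_imp (IH a) => x; apply: JS.
  apply: kallZ' => x.
  by move: (JM (x : R) (Jy y w)); rewrite mulrC.
rewrite -scaleN1r; apply: kallZ; first by move=> x h; apply: JM.
by apply: kall_imp (IH b) => x; apply: JS.
Qed.

Variable I : R -> Prop.
Hypothesis I0 : I 0.
Hypothesis ID : forall a b, I a -> I b -> I (a + b).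
Hypothesis IM : forall r a, I a -> I (r * a).
Definition Io' (x : R^o) : Prop := I x.

Variable p : nat.
Hypothesis hB : forall j r, (p <= j)%N -> J y p r -> I (y j * r).

Lemma zz_cycle q : kall Io' (kd y (zz q (kd y (kT p)))) /\
  kall (Jo p) (zz q (kd y (kT p))).
Proof.
elim: q => [|q [IH1 IH2]] /=.
  by rewrite kdd; split; [apply: kall_zero | apply: kall_kd_J].
split; last by split=> //; apply: kall_zero; apply: J0.
split.
  rewrite kd0 add0r; apply: (kallZ2 _ IH2).
  by move=> x hx; apply: hB => //; apply: leq_addl.
rewrite -scaleN1r; apply: kallZ => //; by move=> x h; apply: IM.
Qed.
End Top.

Section Final.
Variable R : comNzRingType.
Variable y : nat -> R.
Variable I : R -> Prop.
Hypothesis I0 : I 0.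
Hypothesis ID : forall a b, I a -> I b -> I (a + b).
Hypothesis IM : forall r a, I a -> I (r * a).

Lemma final_contra p q (u : kc R^o (q.+1 + p.+1)) :
  kall (Io' I) (kd y u - zz q.+1 (kd y (kT R p.+1))) ->
  I (y (q + p.+1) * ktop u) /\ I ((-1) ^+ q.+1 * (y p * ktop u) - y p).
Proof.
move=> hD; split.
  case: u hD => [u1 u2] /= [h1 _].
  have := kall_top h1; rewrite /Io' !ktopD !ktopN ktopZ ktop_kd ktop0.
  by rewrite add0r subr0.
have := kall_strip (q := q.+1) hD; rewrite kstripB kstrip_kd kstrip_zz.
have := ktop_strip (q := q.+1) u.
case: (kstrip u) => [v1 v2] /= e [h1 _].
have := kall_top h1; rewrite /Io' kd0.
rewrite !(ktopD, ktopN, ktopZ, ktop_kd, ktop0, kT_top) !add0r e.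
have e1 : ((y p)%:A : R^o) = y p by apply: mulr1.
by rewrite e1.
Qed.
End Final.

Section Concrete.
Variable k : fieldType.
Variable n : nat.
Local Notation R := {mpoly k[n]}.

Lemma coefMX0 (p : R) (j : 'I_n) (m : 'X_{1..n}) : m j = 0%N -> (p * 'X_j)@_m = 0.
Proof.
move=> mj; apply/eqP; rewrite mcoeff_eq0; apply/negP => hm.
move: hm; rewrite (perm_mem (msuppMX p U_(j))) => /mapP [m' _ em].
by move: mj; rewrite em mnmDE mnm1E eqxx.
Qed.

Lemma coefXM (p : R) (j : 'I_n) m : ('X_j * p)@_(U_(j) + m) = p@_m.
Proof. by rewrite mulrC mcoeffMX. Qed.

Lemma coefMX1 (p : R) (j : 'I_n) : (p * 'X_j)@_(U_(j))%MM = p@_0%MM.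
Proof. by have := mcoeffMX p U_(j) 0%MM; rewrite addm0. Qed.

Lemma coefXM1 (p : R) (j : 'I_n) : ('X_j * p)@_(U_(j))%MM = p@_0%MM.
Proof. by rewrite mulrC coefMX1. Qed.

Lemma coefsign (z : R) q m : ((-1) ^+ q * z)@_m = (-1) ^+ q * z@_m.
Proof.
elim: q => [|q IH]; first by rewrite !expr0 !mul1r.
by rewrite !exprS -!mulrA !mulN1r mcoeffN IH.
Qed.

Variable s : nat -> 'I_n.
Local Notation y := (fun i => ('X_(s i) : R)).

Lemma J_y_lt w i : (i < w)%N -> J y w (y i).
Proof.
move=> iw; exists (fun j => if j == i then 1 else 0).
rewrite (bigD1 (Ordinal iw)) //= eqxx mul1r big1 ?addr0 // => j hj.
have -> : (nat_of_ord j == i) = false.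
  by apply/negbTE; apply: contra hj => /eqP h; apply/eqP/val_inj.
by rewrite mul0r.
Qed.

Lemma J_inv w (r : R) m : J y w r -> r@_m != 0 -> [exists i : 'I_w, 0 < m (s i)]%N.
Proof.
move=> [f ->]; apply: contraR; rewrite negb_exists => /forallP h.
rewrite raddf_sum big1 // => i _; apply: coefMX0.
by move: (h i); rewrite lt0n negbK => /eqP.
Qed.

Lemma J_of w (r : R) : (forall m, r@_m != 0 -> [exists i : 'I_w, 0 < m (s i)]%N) ->
  J y w r.
Proof.
move=> h; rewrite (mpolyE r) big_seq.
apply: (big_ind (J y w)); [exact: J0 | exact: JD | ].
move=> m; rewrite mcoeff_msupp => /h /existsP [i hi].
have em : m = (U_(s i) + (m - U_(s i)))%MM.
  apply/mnmP => t; rewrite mnmDE mnmBE mnm1E.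
  by case: eqP => [<-|]; [rewrite add1n subn1 prednK | rewrite add0n subn0].
have -> : 'X_[m] = 'X_(s i) * 'X_[m - U_(s i)] :> R by rewrite -mpolyXD -em.
by rewrite scalerAr mulrC; apply: JM; exact: J_y_lt.
Qed.

Variable N : nat.
Hypothesis hs : forall i j, (i < N)%N -> (j < N)%N -> s i = s j -> i = j.

Lemma reg_y w (b : R) : (w < N)%N -> J y w (y w * b) -> J y w b.
Proof.
move=> wN hJ; apply: J_of => m hm.
have := J_inv (m := (U_(s w) + m)%MM) hJ; rewrite coefXM => /(_ hm).
move=> /existsP [i]; rewrite mnmDE mnm1E.
have -> : (s w == s i) = false.
  apply/negbTE/eqP => /hs h.
  have iw := ltn_ord i.
  by move: iw; rewrite -h ?ltnn //; apply: ltn_trans wN.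
by rewrite add0n => hi; apply/existsP; exists i.
Qed.

Variable e : rel 'I_n.
Local Notation I := (@edge_ideal k n e).

Lemma I0 : I 0.
Proof. by exists (fun _ _ => 0); rewrite big1 // => i _; rewrite big1 // => j _; rewrite mul0r. Qed.
Lemma ID a b : I a -> I b -> I (a + b).
Proof.
move=> [f ->] [g ->]; exists (fun i j => f i j + g i j).
rewrite -big_split; apply: eq_bigr => i _; rewrite -big_split.
by apply: eq_bigr => j _; rewrite mulrDl.
Qed.
Lemma IM r a : I a -> I (r * a).
Proof.
move=> [f ->]; exists (fun i j => r * f i j).
rewrite mulr_sumr; apply: eq_bigr => i _; rewrite mulr_sumr.
by apply: eq_bigr => j _; rewrite mulrA.
Qed.
Lemma I_edge a b : e a b -> I ('X_a * 'X_b).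
Proof.
move=> eab; exists (fun i j => if (i == a) && (j == b) then 1 else 0).
rewrite (bigD1 a) //= (bigD1 b) //= !eqxx mul1r big1 ?addr0.
  rewrite big1 ?addr0 // => i ia; rewrite big1 // => j _.
  by rewrite (negbTE ia) mul0r.
by move=> j /andP [_ jb]; rewrite (negbTE jb) mul0r.
Qed.
Lemma I_lin p a : I p -> p@_(U_(a))%MM = 0.
Proof.
move=> [f ->]; rewrite raddf_sum big1 // => i _; rewrite raddf_sum big1 // => j _.
change ((f i j * ('X_i * 'X_j))@_(U_(a))%MM = 0); rewrite mulrA; have [ja|ja] := eqVneq j a.
  rewrite ja coefMX1; apply: coefMX0; rewrite mnmE //.
by apply: coefMX0; rewrite mnm1E eq_sym (negbTE ja).
Qed.
End Concrete.

Theorem theorem4p5 (k : fieldType) (n : nat) (e : rel 'I_n) (W : {set 'I_n}) :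
  simple_graph e ->
  compl_induced_disconnected e W ->
  pd_ge (@edge_ideal k n e) (#|W| - 1).
Proof.
move=> [n0 [irr sym]] [u [v [uW vW nc]]] m [P [d [eps [hproj hvan hsurj hex0 hex]]]].
rewrite leqNgt; apply/negP => hm.
pose A := [set x in W | connect (compl_induced_adj e W) u x].
pose B := W :\: A.
have uA : u \in A by rewrite inE uW connect0.
have vB : v \in B by rewrite !inE vW andbT /= (negbTE nc).
have adj a b : a \in A -> b \in B -> e a b.
  move=> aA; rewrite in_setD => /andP [bnA bW].
  have ab : a != b by apply/eqP => ab; move: bnA; rewrite -ab aA.
  move: aA; rewrite inE => /andP [aW cua].
  apply/negPn/negP => nab; move/negP: bnA; apply; rewrite inE bW /=.
  apply: (connect_trans cua); apply: connect1.
  by rewrite /compl_induced_adj aW bW nab ab.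
have cardW : #|W| = (#|A| + #|B|)%N.
  have sAW : A \subset W by apply/subsetP => x; rewrite inE => /andP [].
  by rewrite -(cardsID A W) (setIidPr sAW).
have [p1 hp1] : exists p1, #|A| = p1.+1.
  by exists #|A|.-1; rewrite prednK // card_gt0; apply/set0Pn; exists u.
have [q1 hq1] : exists q1, #|B| = q1.+1.
  by exists #|B|.-1; rewrite prednK // card_gt0; apply/set0Pn; exists v.
pose sq := enum A ++ enum B.
pose sg := fun j => nth v sq j.
have szA : size (enum A) = p1.+1 by rewrite -cardE.
have szB : size (enum B) = q1.+1 by rewrite -cardE.
have sgA j : (j < p1.+1)%N -> sg j \in A.
  by move=> hj; rewrite /sg nth_cat szA hj -mem_enum mem_nth // szA.
have sgB j : (p1.+1 <= j)%N -> sg j \in B.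
  move=> hj; rewrite /sg nth_cat szA ltnNge hj /=.
  have [lt|ge] := ltnP (j - p1.+1) q1.+1.
    by rewrite -mem_enum mem_nth // szB.
  by rewrite nth_default // szB.
have usq : uniq sq.
  rewrite cat_uniq !enum_uniq andbT /=; apply/hasPn => x.
  by rewrite !mem_enum in_setD => /andP [].
have hs : forall i j, (i < q1.+1 + p1.+1)%N -> (j < q1.+1 + p1.+1)%N ->
    sg i = sg j -> i = j.
  have ssq : size sq = (q1.+1 + p1.+1)%N by rewrite size_cat szA szB addnC.
  move=> i j hi hj /eqP; rewrite /sg nth_uniq ?ssq //.
  by move/eqP.
pose y := fun i => ('X_(sg i) : {mpoly k[n]}).
pose N := (q1.+1 + p1.+1)%N.
have reg : forall w b, (w < N)%N -> J y w (y w * b) -> J y w b.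
  by move=> w b; apply: (@reg_y k n sg N hs w b).
pose I := @edge_ideal k n e.
have hB : forall j r, (p1.+1 <= j)%N -> J y p1.+1 r -> I (y j * r).
  move=> j r hj [f ->]; rewrite mulr_sumr.
  apply: (big_ind I); [exact: I0 | exact: ID | ].
  move=> i _; rewrite mulrCA; apply: IM; apply: I_edge; rewrite sym.
  by apply: adj; [apply: sgA | apply: sgB].
have mj : (m < q1.+1 + p1)%N.
  by move: hm; rewrite cardW hp1 hq1 addSn subn1 /= addnC.
have hz := kge_zz q1.+1 (kge_kd y (kge_kT _ p1.+1)).
have I0' := @I0 k n e.
have ID' := @ID k n e.
have IM' := @IM k n e.
have [hdz _] := zz_cycle I0' IM' hB q1.+1.
have [t ht] := chase reg hproj hvan hex (leqnn N) I0' ID' IM' hsurj hex0 mj hz hdz.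
have [h1 h2] := final_contra (p := p1) (q := q1) ht.
have c0 := I_lin (sg (q1 + p1.+1)) h1.
rewrite coefXM1 in c0.
have c1 := I_lin (sg p1) h2.
rewrite mcoeffB coefsign coefXM1 c0 mulr0 mcoeffX eqxx sub0r in c1.
by move/eqP: c1; rewrite oppr_eq0 oner_eq0.
Qed.
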